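(* Let $U$ satisfy the standing assumption below with constant $c$. Let $N\ge2$, and let $p$ be a program of length $N$ which has not stopped on $U$ by time $2^{2N+2c+1}$. Then $U(p)$ does not stop exactly at any algorithmically random time $t\ge2^{2N+2c+1}$. That is, if $t_p<\infty$, then $t_p$ is not algorithmically random.
   Context: Strings are binary and $|x|$ is the length of $x$. $\mathrm{bin}:\{1,2,\dots\}\to\Sigma^*$ sends $n$ to its binary expansion with the leading $1$ removed. $U$ is a fixed universal Turing machine, and $\nabla(x)=\min\{n\ge1:U(\mathrm{bin}(n))=x\}$ is the natural complexity of $x$. $t_p$ is the exact step at which $U(p)$ halts, with $t_p=\infty$ if it never halts. A nonempty string $x$ is algorithmically random if $\nabla(x)\ge2^{|x|}/|x|$. A time $t\ge2$ is algorithmically random if $\mathrm{bin}(t)$ is algorithmically random. Standing assumption: there is a computable transformation $p\mapsto time(p)$ and a positive integer constant $c$ such that, for every program $p$: (i) $U(p)$ halts if and only if $U(time(p))$ halts; (ii) $|time(p)|\le|p|+c$; (iii) if $U(p)$ halts, then $U(time(p))=\mathrm{bin}(t_p)$. *)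

(* Defs.v *)
From mathcomp Require Import all_boot all_order all_algebra.
Set Implicit Arguments. Unset Strict Implicit. Unset Printing Implicit Defensive.
Import Order.TTheory GRing.Theory Num.Theory.

(* Little-endian binary digits of n (fuel n suffices). *)
Fixpoint bits_aux (fuel n : nat) : seq bool :=
  match fuel with
  | 0 => [::]
  | f.+1 => if n is 0 then [::] else odd n :: bits_aux f n./2
  end.
Definition bits (n : nat) : seq bool := bits_aux n n.

(* bin n : binary expansion of n (most significant bit first) with the
   leading 1 removed. *)
Definition bin (n : nat) : seq bool := behead (rev (bits n)).

(* A machine is modelled by its bounded-run function:
   M p k = Some x  iff  M(p) has halted with output x within k steps,
   M p k = None    iff  M(p) has not halted within k steps. *)
Definition machine := seq bool -> nat -> option (seq bool).

Definition monotone_machine (M : machine) : Prop :=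
  forall p k, M p k <> None -> M p k.+1 = M p k.

Definition halts (M : machine) (p : seq bool) : Prop := exists k, M p k <> None.

Definition outputs (M : machine) (p x : seq bool) : Prop :=
  exists k, M p k = Some x.

Definition halts_at (M : machine) (p : seq bool) (t : nat) : Prop :=
  M p t <> None /\ forall k, k < t -> M p k = None.

(* x is algorithmically random: x nonempty and nabla(x) >= 2^|x|/|x|,
   where nabla(x) = min {n >= 1 : M(bin n) = x}  (= +infinity if no such n). *)
Definition alg_random (M : machine) (x : seq bool) : Prop :=
  (0 < size x)%N /\
  forall n : nat, (0 < n)%N -> outputs M (bin n) x ->
    ((2 ^ size x)%:R / (size x)%:R <= (n%:R : rat))%R.

Definition alg_random_time (M : machine) (t : nat) : Prop :=
  (2 <= t)%N /\ alg_random M (bin t).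

Definition standing_assumption (M : machine) (tm : seq bool -> seq bool)
    (c : nat) : Prop :=
  (0 < c)%N /\
  (forall p, halts M p <-> halts M (tm p)) /\
  (forall p, (size (tm p) <= size p + c)%N) /\
  (forall p t, halts_at M p t -> outputs M (tm p) (bin t)).

(* Main.v *)
Require Import Defs.
From mathcomp Require Import all_boot all_order all_algebra.
From mathcomp Require Import zify.
Import Order.TTheory GRing.Theory Num.Theory.

Lemma bits_aux_fuel f g n : (n <= f)%N -> (n <= g)%N -> bits_aux f n = bits_aux g n.
Proof.
elim: f g n => [|f IH] [|g] [|n] //= Hf Hg.
congr (_ :: _); apply: IH; lia.
Qed.

Lemma bitsE n : bits n = if n is 0 then [::] else odd n :: bits n./2.
Proof.
case: n => [|n] //=. rewrite /bits /=. congr (_ :: _).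
apply: bits_aux_fuel; rewrite ?leqnn //. lia.
Qed.

Definition enc (q : seq bool) : nat := foldl (fun acc (b : bool) => acc.*2 + b) 1 q.

Lemma enc_rcons q b : enc (rcons q b) = (enc q).*2 + b.
Proof. by rewrite /enc -cats1 foldl_cat. Qed.

Lemma enc_pos q : (0 < enc q)%N.
Proof. elim/last_ind: q => [|q b IH] //; rewrite enc_rcons; lia. Qed.

Lemma bits_enc q : bits (enc q) = rev q ++ [:: true].
Proof.
elim/last_ind: q => [|q b IH]; first by rewrite /enc /= /bits.
rewrite enc_rcons bitsE.
have hp := enc_pos q.
case E: ((enc q).*2 + b) => [|m]; first lia.
rewrite -E rev_rcons /= -IH.
have -> : ((enc q).*2 + b)./2 = enc q.
  rewrite halfD odd_double doubleK /=. by clear E; case: b; rewrite /= ?addn0.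
rewrite oddD odd_double /=. by clear E; case: b.
Qed.

Lemma bin_enc q : bin (enc q) = q.
Proof. by rewrite /bin bits_enc rev_cat revK. Qed.

Lemma enc_lt q : (enc q < 2 ^ (size q).+1)%N.
Proof.
elim/last_ind: q => [|q b IH] //. rewrite enc_rcons size_rcons expnS.
case: b; lia.
Qed.

Lemma bits_bound n : (n < 2 ^ size (bits n))%N.
Proof.
elim: n {-2}n (leqnn n) => [|k IH] n Hn; first by case: n Hn.
case: n Hn => [|n] Hn //. rewrite bitsE /= expnS.
have Hh : ((n.+1)./2 <= k)%N.
  have := odd_double_half n.+1. rewrite -addnn. lia.
have := IH _ Hh.
have := odd_double_half n.+1. rewrite (_ : uphalf n = n.+1./2) //. rewrite -!addnn. lia.
Qed.

Lemma pow_lin j : (3 <= j)%N -> (j.*2.+1 < 2 ^ j)%N.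
Proof.
elim: j => [|j IH] //= Hj. case: (ltngtP j 3) => H.
- have -> : j.+1 = 3 by lia. by [].
- rewrite expnS. have := IH (ltnW H). lia.
- subst. by [].
Qed.

Theorem mainTheorem6 (U : machine) (hU : monotone_machine U)
    (tm : seq bool -> seq bool) (c : nat)
    (hstand : standing_assumption U tm c)
    (N : nat) (hN : (2 <= N)%N) (p : seq bool) (hp : size p = N)
    (hnot : forall k, (k < 2 ^ (2 * N + 2 * c + 1))%N -> U p k = None) :
  forall t : nat, halts_at U p t -> ~ alg_random_time U t.
Proof.
move=> t Ht [_ [_ Hr]].
case: hstand => [c0 [_ [Hsz Hout]]].
have Hq := Hout _ _ Ht.
set q := tm p in Hq.
have Htge : (2 ^ (2 * N + 2 * c + 1) <= t)%N.
  rewrite leqNgt; apply/negP => Hlt; case: Ht => Ht _; exact: Ht (hnot _ Hlt).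
set m := size (bin t).
have Hm : (2 * N + 2 * c + 1 <= m)%N.
  have := bits_bound t. rewrite /m /bin size_behead size_rev => Hb.
  have : (2 ^ (2 * N + 2 * c + 1) < 2 ^ size (bits t))%N by lia.
  rewrite ltn_exp2l //. lia.
have Hn0 := enc_pos q.
have := Hr (enc q) Hn0. rewrite bin_enc => /(_ Hq).
have mpos : (0 < m)%N by lia.
rewrite ler_pdivrMr ?ltr0n // -natrM ler_nat => Hle.
set a := (N + c).+1.
have Hea : (enc q < 2 ^ a)%N.
  apply: (leq_trans (enc_lt q)). rewrite leq_exp2l //. have := Hsz p. rewrite /a /q hp. lia.
have Hma : m = a + (m - a) by lia.
have Hj : (m <= 2 ^ (m - a))%N. have := pow_lin (m - a) ltac:(lia). lia.
have : (enc q * m < 2 ^ a * 2 ^ (m - a))%N.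
  apply: (@leq_trans (enc q * 2 ^ (m - a)).+1).
  - rewrite ltnS. by apply: leq_mul.
  - rewrite ltn_mul2r. apply/andP; split; [by rewrite expn_gt0 | done].
rewrite -expnD -Hma. rewrite /m in Hle *. lia.
Qed.
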